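(* Let $G$ be a DCG containing a cycle $C=(v_1,\dots,v_k)$ of distinct vertices, $k\ge2$, let $H=\textsc{Reverse}(G,C)$, and let $\overline{C}=(v_k,v_{k-1},\dots,v_1)$ be the reversed cycle, which is a cycle of $H$. Then: (1) every vertex has the same set of descendants in $G$ as in $H$; (2) $G=\textsc{Reverse}(H,\overline{C})$.
   Context: A DCG is a directed graph without self-loops. A vertex $x$ is a descendant of $v$ if there is a directed path from $v$ to $x$. $\mathrm{Pa}_G(v)$ is the set of $u$ with $u\to v$ in $G$. For a cycle $C=(v_1,\dots,v_k)$ (edges $v_i\to v_{i+1}$, indices mod $k$), $\textsc{Reverse}(G,C)$ is the DCG on the same vertex set with edge set $$\{v_{i+1}\to v_i\}_{i=1}^k\ \cup\ \{a\to b\in E(G): b\notin C\}\ \cup\ \{w\to v_{i-1} : 1\le i\le k,\ w\in \mathrm{Pa}_G(v_i)\setminus\{v_{i-1}\}\}$$ (indices mod $k$); here, for a cycle listed as $(u_1,\dots,u_k)$, the role of $v_{i-1}$ is played by the predecessor of the vertex along that cycle. *)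

(* Defs.v *)
From mathcomp Require Import all_boot.
Set Implicit Arguments. Unset Strict Implicit. Unset Printing Implicit Defensive.

Definition dcg (V : finType) (G : rel V) : Prop := forall v, ~~ G v v.

(* C = [:: v_1; ...; v_k] is a cycle of G of distinct vertices, k >= 2:
   edges v_i -> v_(i+1), indices mod k (path.v's [cycle]). *)
Definition is_cycle (V : finType) (G : rel V) (C : seq V) : Prop :=
  [/\ cycle G C, uniq C & 1 < size C].

Definition descendants (V : finType) (G : rel V) (v : V) : {set V} :=
  [set x | connect G v x].

(* The three
   disjuncts are the three parts of the edge set in the paper:
   - v_(i+1) -> v_i,
   - a -> b in G with b not in C,
   - w -> v_(i-1) for w in Pa_G(v_i) \ {v_(i-1)}. *)
Definition Reverse (V : finType) (G : rel V) (C : seq V) : rel V :=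
  fun a b =>
    [|| (a \in C) && (b == prev C a),
        G a b && (b \notin C)
      | [exists u, [&& u \in C, G a u, a != prev C u & b == prev C u]]].

(* Main.v *)
Require Import Defs.
From mathcomp Require Import all_boot.

Lemma cycle_connect (V : finType) (e : rel V) (p : seq V) x y :
  cycle e p -> x \in p -> y \in p -> connect e x y.
Proof.
move=> cp xp yp.
case: (rot_to xp) => i q eq.
have : cycle e (x :: q) by rewrite -eq rot_cycle.
have : y \in x :: q by rewrite -eq mem_rot.
move=> yin /= cyc; apply: (path_connect cyc).
by move: yin; rewrite /= !inE mem_rcons inE => /orP [->|->]; rewrite ?orbT.
Qed.

Theorem mainTheorem12 (V : finType) (G : rel V) (C : seq V) :
  dcg G -> is_cycle G C ->
  let H := Reverse G C in
  is_cycle H (rev C) /\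
  (forall v : V, descendants G v = descendants H v) /\
  (forall a b : V, G a b = Reverse H (rev C) a b).
Proof.
move=> dG [cG unC sC] H.
have HC : cycle H (rev C).
  rewrite rev_cycle; apply: (@sub_in_cycle _ (mem C) (frel (next C))); last first.
    exact: cycle_next.
    by apply/allP.
  move=> x y xC yC /= /eqP <-.
  by rewrite /H /Reverse mem_next xC (prev_next unC) eqxx.
have HGsub : subrel H (connect G).
  move=> a b; rewrite /H /Reverse => /or3P [/andP [aC /eqP ->]|/andP [ab _]|/existsP [u /and4P [uC au _ /eqP ->]]].
  - by apply: cycle_connect cG _ _; rewrite ?mem_prev.
  - exact: connect1.
  - apply: connect_trans (connect1 au) _.
    by apply: cycle_connect cG _ _; rewrite ?mem_prev.
have GHsub : subrel G (connect H).
  move=> a b ab.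
  case bC: (b \in C); last first.
    by apply: connect1; rewrite /H /Reverse ab bC orbT.
  have uC : prev C b \in C by rewrite mem_prev.
  have ub : connect H (prev C b) b.
    by apply: cycle_connect HC _ _; rewrite mem_rev.
  case: (eqVneq a (prev C b)) => [->//|anu].
  apply: connect_trans ub; apply: connect1.
  rewrite /H /Reverse; apply/or3P; apply: Or33; apply/existsP; exists b.
  by rewrite bC ab anu eqxx.
split; first by split; rewrite ?rev_uniq ?size_rev.
split.
  move=> v; apply/setP => x; rewrite !inE; apply/idP/idP.
  - exact: connect_sub GHsub _ _.
  - exact: connect_sub HGsub _ _.
move=> a b; rewrite /Reverse !mem_rev (prev_rev unC).
apply/idP/idP.
- move=> ab.
  case bC: (b \in C); last by rewrite /H /Reverse ab bC !orbT.
  case: (eqVneq a (prev C b)) => [ea|anu].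
    by rewrite ea mem_prev bC (next_prev unC) eqxx.
  apply/or3P; apply: Or33; apply/existsP; exists (prev C b).
  rewrite mem_rev mem_prev bC (prev_rev unC) (next_prev unC) eqxx andbT /=.
  rewrite andbC.
  have -> : a != b by apply/eqP => eab; move: (dG b); rewrite -{1}eab ab.
  rewrite /H /Reverse; apply/or3P; apply: Or33; apply/existsP; exists b.
  by rewrite bC ab anu eqxx.
- case/or3P.
  + by case/andP => aC /eqP ->; apply: next_cycle.
  + case/andP; rewrite /H /Reverse => /or3P [/andP [aC /eqP ->]|/andP [//]|/existsP [u /and4P [uC _ _ /eqP ->]]].
    * by rewrite mem_prev aC.
    * by rewrite mem_prev uC.
  + case/existsP => u /and4P []; rewrite mem_rev => uC; rewrite (prev_rev unC) => Hau anu /eqP ->.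
    move: Hau; rewrite /H /Reverse => /or3P [/andP [aC /eqP eu]|/andP [_]|/existsP [w /and4P [wC aw _ /eqP ew]]].
    * by move: anu; rewrite eu (next_prev unC) eqxx.
    * by rewrite uC.
    * by rewrite ew (next_prev unC).
Qed.
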